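(* Let $m\ge 2$ and let $v_m=\sum_{\sigma\in\mathscr{T}_m}(-1)^{\sigma^{-1}(1)-1}\sigma\in\mathbb{Z}\mathcal{S}_m$. Then $$v_m=\prod_{i=2}^{m}\left(1-(-1)^i\tau_i\right)=(1-\tau_2)(1+\tau_3)(1-\tau_4)\cdots\left(1-(-1)^m\tau_m\right),$$ the product being taken in increasing order of $i$ from left to right.
   Context: $\mathcal{S}_m$ is the group of bijections of $I_m=\{1,\ldots,m\}$, with $\sigma\circ\tau$ meaning apply $\tau$ first, then $\sigma$; $\mathbb{Z}\mathcal{S}_m$ is its integral group ring, with multiplication induced by $\circ$. $\mathscr{T}_m=\{\sigma\in\mathcal{S}_m \mid \exists t\in I_m:\ \sigma(1)>\sigma(2)>\cdots>\sigma(t)=1,\ \sigma(t)<\sigma(t+1)<\cdots<\sigma(m)\}$. For $i\in I_m$, $\tau_i\in\mathcal{S}_m$ is defined by $\tau_i(j)=i+1-j$ for $1\le j\le i$ and $\tau_i(j)=j$ for $j>i$. *)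

(* Defs.v *)
From HB Require Import structures.
From mathcomp Require Import all_boot all_order all_fingroup all_algebra.
Set Implicit Arguments. Unset Strict Implicit. Unset Printing Implicit Defensive.
Import GRing.Theory.

(* Convention: I_m = {1,...,m} is encoded as 'I_m = {0,...,m-1}, the point k
   of I_m being the ordinal of value k-1. *)

(* Composition sigma o tau (apply tau first, then sigma).
   NB: in MathComp, (s * t)%g x = t (s x), so sigma o tau = (tau * sigma)%g. *)
Definition comp (m : nat) (s t : 'S_m) : 'S_m := (t * s)%g.

(* The integral group ring Z S_m: finitely supported functions S_m -> Z,
   i.e. formal Z-linear combinations of permutations. *)
Notation ZS m := {ffun 'S_m -> int}.

Definition gr (m : nat) (s : 'S_m) : ZS m := [ffun p => ((p == s) : int)%R].

Definition gr_one (m : nat) : ZS m := gr 1%g.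

Definition gr_mul (m : nat) (a b : ZS m) : ZS m :=
  [ffun p => (\sum_(s : 'S_m) \sum_(t : 'S_m | comp s t == p) a s * b t)%R].

(* tau_i for 1 <= i <= m: j |-> i+1-j for j <= i, j |-> j for j > i.
   In 0-based indices: k |-> (i-1) - k for k < i, k |-> k otherwise.
   (For i > m we truncate i to m, which is never used.) *)
Definition tau_val (m i k : nat) : nat :=
  if k < minn i m then (minn i m).-1 - k else k.

Lemma tau_val_lt (m i : nat) (k : 'I_m) : (tau_val m i k < m)%N.
Proof.
rewrite /tau_val; case: ifP => // H.
have H1 : (0 < minn i m)%N by apply: leq_ltn_trans H.
apply: leq_ltn_trans (leq_subr _ _) _.
by rewrite prednK // geq_minr.
Qed.

Definition tau_fun (m i : nat) (k : 'I_m) : 'I_m := Ordinal (tau_val_lt i k).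

Lemma tau_fun_inj (m i : nat) : injective (@tau_fun m i).
Proof.
move=> a b /(congr1 val) /=; rewrite /tau_val => E.
apply: val_inj => /=.
set M := minn i m in E.
case: ifP E => Ha; case: ifP => Hb //= E.
- have Ma : (a <= M.-1)%N by rewrite -ltnS prednK //; apply: leq_ltn_trans Ha.
  have Mb : (b <= M.-1)%N by rewrite -ltnS prednK //; apply: leq_ltn_trans Hb.
  by rewrite -(subKn Ma) -(subKn Mb) E.
- have : (M.-1 - a < M)%N.
    apply: leq_ltn_trans (leq_subr _ _) _; rewrite prednK //.
    by apply: leq_ltn_trans Ha.
  by rewrite E Hb.
- have : (M.-1 - b < M)%N.
    apply: leq_ltn_trans (leq_subr _ _) _; rewrite prednK //.
    by apply: leq_ltn_trans Hb.
  by rewrite -E Ha.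
Qed.

Definition tau (m i : nat) : 'S_m := perm (@tau_fun_inj m i).

Definition inT (m : nat) (s : 'S_m) : bool :=
  [exists t : 'I_m,
     [&& nat_of_ord (s t) == 0%N,
         [forall i : 'I_m, forall j : 'I_m,
            ((i < j)%N && (j <= t)%N) ==> (s j < s i)%N] &
         [forall i : 'I_m, forall j : 'I_m,
            ((t <= i)%N && (i < j)%N) ==> (s i < s j)%N]]].

(* v_m for m = n.+1 (so that the point 1 of I_m, i.e. ord0, exists):
   v_m = sum_{sigma in T_m} (-1)^(sigma^{-1}(1) - 1) sigma.
   With 0-based indexing, sigma^{-1}(1) - 1 is the value of sigma^-1 ord0. *)
Definition v (n : nat) : ZS n.+1 :=
  (\sum_(s : 'S_n.+1 | inT s) gr s *~ ((-1) ^+ nat_of_ord ((s^-1)%g ord0)))%R.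

Definition gr_prod (m : nat) (l : seq (ZS m)) : ZS m :=
  foldr (@gr_mul m) (gr_one m) l.

Definition tau_prod (m : nat) : ZS m :=
  gr_prod [seq (gr_one m - gr (tau m i) *~ ((-1) ^+ i))%R | i <- iota 2 m.-1].

(* Main.v *)
Require Import Defs.
From HB Require Import structures.
From mathcomp Require Import all_boot all_order all_fingroup all_algebra.
From mathcomp Require Import zify.
Set Implicit Arguments. Unset Strict Implicit. Unset Printing Implicit Defensive.
Import GRing.Theory.
Section Alg.
Local Open Scope ring_scope.
Variable m : nat.
Implicit Types a b c : ZS m.

Lemma gr_mulE a b p :
  gr_mul a b p = \sum_(s : 'S_m) a s * b (p * s^-1)%g.
Proof.
rewrite ffunE; apply: eq_bigr => s _.
rewrite (bigD1 (p * s^-1)%g) /=; last by rewrite /Defs.comp mulgKV.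
rewrite big1 ?addr0 // => t /andP [/eqP <- /eqP]; by rewrite /Defs.comp mulgK.
Qed.

Lemma gr_mul_gr a t p : gr_mul a (gr t) p = a (t^-1 * p)%g.
Proof.
rewrite gr_mulE (bigD1 (t^-1 * p)%g) //= big1.
  by rewrite ffunE invMg invgK mulKVg eqxx mulr1 addr0.
move=> s /eqP Hs; rewrite ffunE; case: eqP; last by rewrite mulr0.
by move=> E; exfalso; apply: Hs; rewrite -E invMg invgK mulgKV.
Qed.

Lemma gr_mul1l b : gr_mul (gr_one m) b = b.
Proof.
apply/ffunP => p; rewrite gr_mulE (bigD1 1%g) //= big1.
  by rewrite ffunE eqxx mul1r invg1 mulg1 addr0.
by move=> s /negbTE Hs; rewrite ffunE Hs mul0r.
Qed.

Lemma gr_mulr1 a : gr_mul a (gr_one m) = a.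
Proof. by apply/ffunP => p; rewrite gr_mul_gr invg1 mul1g. Qed.

Lemma gr_mulA a b c : gr_mul a (gr_mul b c) = gr_mul (gr_mul a b) c.
Proof.
apply/ffunP => p; rewrite !gr_mulE.
under [RHS]eq_bigr => u _ do rewrite gr_mulE mulr_suml.
rewrite exchange_big /=; apply: eq_bigr => s _.
rewrite (gr_mulE b c) mulr_sumr (reindex_inj (mulIg s^-1)%g) /=.
apply: eq_bigr => u _; rewrite mulrA; congr (_ * _ * c _).
by rewrite invMg invgK !mulgA mulgKV.
Qed.

Lemma gr_mulBr a b c : gr_mul a (b - c) = gr_mul a b - gr_mul a c.
Proof.
apply/ffunP => p; rewrite [RHS]ffunE [X in _ = _ + X]ffunE !gr_mulE -sumrB; apply: eq_bigr => s _.
by rewrite !ffunE mulrBr.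
Qed.

Lemma gr_mulzr a b z : gr_mul a (b *~ z) = gr_mul a b *~ z.
Proof.
apply/ffunP => p; rewrite ffunMzE !gr_mulE mulrz_suml; apply: eq_bigr => s _.
by rewrite ffunMzE mulrzAr.
Qed.

Lemma gr_prod_rcons (s : seq (ZS m)) (x : ZS m) : gr_prod (rcons s x) = gr_mul (gr_prod s) x.
Proof.
elim: s => [|y s IH] /=; first by rewrite gr_mul1l gr_mulr1.
by rewrite IH gr_mulA.
Qed.
End Alg.

Section Comb.
Variable N : nat.
Notation I := ('I_N.+1).
Notation S := ('S_N.+1).

Lemma tauE k (x : I) : k < N.+1 ->
  nat_of_ord (tau N.+1 k.+1 x) = if x <= k then k - x else x.
Proof.
move=> Hk; rewrite /tau permE /= /tau_val.
have -> : minn k.+1 N.+1 = k.+1 by apply/minn_idPl.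
by [].
Qed.

Definition PT k (p : S) (t : I) :=
  [/\ t < k, nat_of_ord (p t) = 0,
   (forall i : I, k <= i -> nat_of_ord (p i) = nat_of_ord i),
   (forall i j : I, i < j -> j <= t -> p j < p i) &
   (forall i j : I, t <= i -> i < j -> j < k -> p i < p j)].

Definition PTb k (p : S) (t : I) :=
  [&& t < k, nat_of_ord (p t) == 0,
   [forall i : I, (k <= i) ==> (nat_of_ord (p i) == nat_of_ord i)],
   [forall i : I, forall j : I, ((i < j) && (j <= t)) ==> (p j < p i)] &
   [forall i : I, forall j : I, [&& t <= i, i < j & j < k] ==> (p i < p j)]].

Lemma PTP k p t : reflect (PT k p t) (PTb k p t).
Proof.
apply: (iffP and5P) => [[H1 /eqP H2 /forallP H3 /forallP H4 /forallP H5]|[H1 H2 H3 H4 H5]]; split => //.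
- by move=> i Hi; apply/eqP; apply: (implyP (H3 i)).
- by move=> i j Hij Hj; have /forallP/(_ j)/implyP := H4 i; apply; rewrite Hij Hj.
- by move=> i j Hi Hij Hj; have /forallP/(_ j)/implyP := H5 i; apply; rewrite Hi Hij Hj.
- by apply/eqP.
- by apply/forallP => i; apply/implyP => Hi; apply/eqP; exact: H3.
- by apply/forallP => i; apply/forallP => j; apply/implyP => /andP [Hij Hj]; exact: H4.
- by apply/forallP => i; apply/forallP => j; apply/implyP => /and3P [Hi Hij Hj]; exact: H5.
Qed.

Definition inTk k (p : S) := [exists t, PTb k p t].

Lemma inTkP k p : reflect (exists t, PT k p t) (inTk k p).
Proof. by apply: (iffP existsP) => [[t /PTP]|[t /PTP]]; exists t. Qed.

Definition W k : ZS N.+1 :=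
  [ffun p => if inTk k p then ((-1) ^+ nat_of_ord ((p^-1)%g ord0))%R else 0%R].

Lemma sgn_pos (p : S) t : nat_of_ord (p t) = 0 -> (p^-1)%g ord0 = t.
Proof. by move=> H; rewrite (_ : ord0 = p t) ?permK //; apply: val_inj. Qed.

Lemma fix_bound K (p : S) (x : I) :
  (forall i : I, K <= i -> nat_of_ord (p i) = nat_of_ord i) -> x < K -> p x < K.
Proof.
move=> H Hx; rewrite ltnNge; apply/negP => Hp.
have E := H (p x) Hp.
have : p (p x) = p x by apply: val_inj.
move/perm_inj => E'.
by move: Hp; rewrite E' leqNgt Hx.
Qed.

Section Step.
Variable k : nat.
Hypothesis Hk0 : 0 < k.
Hypothesis Hk : k < N.+1.
Let tau := tau N.+1 k.+1.
Let kk : I := Ordinal Hk.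

Lemma tauE' (x : I) : x <= k -> nat_of_ord (tau x) = k - x.
Proof. by move=> H; rewrite /tau tauE // H. Qed.
Lemma tauE'' (x : I) : k < x -> nat_of_ord (tau x) = x.
Proof. by move=> H; rewrite /tau tauE // leqNgt H. Qed.

Lemma tauK (x : I) : tau (tau x) = x.
Proof.
case: (leqP x k) => H.
  apply: val_inj => /=; have h := tauE' H; rewrite tauE' h; lia.
by apply: val_inj => /=; rewrite !tauE''.
Qed.

Lemma tau_inv : (tau^-1)%g = tau.
Proof.
apply: (mulgI tau); rewrite mulgV; apply/permP => x.
by rewrite permM perm1 tauK.
Qed.

Lemma tau_k : tau kk = ord0.
Proof. by apply: val_inj => /=; rewrite tauE' //= subnn. Qed.

Lemma stepA (p : S) t t' : PT k p t -> PT k (tau * p)%g t' -> False.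
Proof.
case=> _ _ F1 _ _; case=> _ _ F2 _ _.
have e1 := F1 kk (leqnn k).
have e2 := F2 kk (leqnn k).
rewrite permM tau_k in e2.
have : p ord0 = p kk by apply: val_inj => /=; rewrite e1 e2.
move/perm_inj/(congr1 val) => /= E; lia.
Qed.

Lemma stepB (p : S) t : PT k p t -> PT k.+1 p t.
Proof.
case=> H1 H2 H3 H4 H5; split => //.
- lia.
- by move=> i Hi; apply: H3; lia.
move=> i j Hi Hij Hj; case: (ltnP j k) => Hjk; first exact: H5.
have ej := H3 j Hjk.
have : p i < k by apply: (fix_bound H3); lia.
lia.
Qed.

Lemma pQ (p : S) (x : I) : p x = (tau * p)%g (tau x).
Proof. by rewrite permM tauK. Qed.

Lemma stepC (p : S) t : PT k (tau * p)%g t -> PT k.+1 p (tau t).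
Proof.
case=> H1 H2 H3 H4 H5.
have Ht := tauE' (ltnW H1).
split.
- rewrite Ht; lia.
- by rewrite -H2 permM.
- move=> i Hi; have := H3 i (ltnW Hi); rewrite permM.
  by have -> : tau i = i by apply: val_inj => /=; rewrite tauE''.
- move=> i j Hij Hj; rewrite (pQ p i) (pQ p j).
  rewrite Ht in Hj.
  case: (posnP i) => Hi0.
    have E : nat_of_ord ((tau * p)%g (tau i)) = nat_of_ord (tau i) by apply: H3; rewrite tauE'; lia.
    have : (tau * p)%g (tau j) < k by apply: (fix_bound H3); rewrite tauE'; lia.
    rewrite E tauE'; lia.
  by apply: H5; rewrite ?tauE'; lia.
- move=> i j Hi Hij Hj; rewrite (pQ p i) (pQ p j).
  rewrite Ht in Hi.
  by apply: H4; rewrite ?tauE'; lia.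
Qed.

Lemma stepD (p : S) t : PT k.+1 p t -> PT k p t \/ exists t', PT k (tau * p)%g t'.
Proof.
case=> H1 H2 H3 H4 H5.
set y := (p^-1)%g kk.
have Hy : nat_of_ord (p y) = k by rewrite /y permKV.
have Hyk : y <= k.
  rewrite leqNgt; apply/negP => Hy'.
  have := H3 y Hy'; lia.
have [Hy0|Hyk'] : nat_of_ord y = 0 \/ nat_of_ord y = k.
  case: (posnP y) => [->|Hy0]; first by left.
  case: (ltnP y k) => Hyk2; last by right; lia.
  exfalso; case: (leqP y t) => Hyt.
    have := H4 ord0 y Hy0 Hyt.
    have : p ord0 < k.+1 by apply: (fix_bound H3).
    lia.
  have := H5 y kk (ltnW Hyt) Hyk2 (ltnSn k).
  have : p kk < k.+1 by apply: (fix_bound H3) => /=.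
  lia.
- right; exists (tau t).
  have Ey : y = ord0 by apply: val_inj.
  have Hp0 : nat_of_ord (p ord0) = k by rewrite -Ey.
  have Ht0 : 0 < t.
    rewrite lt0n; apply/negP => /eqP E.
    have Et : t = ord0 by apply: val_inj.
    move: H2; rewrite Et Hp0; lia.
  have Htk : t <= k by lia.
  have Ht := tauE' Htk.
  split.
  + rewrite Ht; lia.
  + by rewrite permM tauK.
  + move=> i Hi; rewrite permM; case: (ltngtP k i) => Hki.
    * have -> : tau i = i by apply: val_inj => /=; rewrite tauE''.
      exact: H3.
    * lia.
    * have -> : tau i = ord0 by apply: val_inj => /=; rewrite tauE' -?Hki ?subnn //; lia.
      lia.
  + move=> i j Hij Hj; rewrite !permM; rewrite Ht in Hj; apply: H5; rewrite ?tauE'; lia.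
  + move=> i j Hi Hij Hj; rewrite !permM; rewrite Ht in Hi; apply: H4; rewrite ?tauE'; lia.
- left.
  have Ey : y = kk by apply: val_inj.
  have Hpk : nat_of_ord (p kk) = k by rewrite -Ey.
  have Htk : t < k.
    rewrite ltn_neqAle -ltnS H1 andbT; apply/negP => /eqP Et.
    have E : t = kk by apply: val_inj.
    move: H2; rewrite E Hpk; lia.
  split => //.
  + move=> i Hi; case: (ltngtP k i) => Hki; [exact: H3 | lia | ].
    have -> : i = kk by apply: val_inj => /=.
    by rewrite Hpk.
  + move=> i j Hi Hij Hj; apply: H5 => //; lia.
Qed.
End Step.

Lemma Wstep k : 0 < k -> k < N.+1 ->
  W k.+1 = gr_mul (W k) (gr_one N.+1 - gr (tau N.+1 k.+1) *~ ((-1) ^+ k.+1))%R.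
Proof.
move=> Hk0 Hk.
rewrite gr_mulBr gr_mulr1 gr_mulzr; apply/ffunP => p.
rewrite [RHS]ffunE [X in _ = (_ + X)%R]ffunE ffunMzE gr_mul_gr (tau_inv Hk0 Hk).
rewrite !ffunE.
case: (inTkP k.+1 p) => [[t Ht]|Hn].
- case: (stepD Hk0 Hk Ht) => [H|[t' H]].
  + have -> : inTk k p by apply/inTkP; exists t.
    have -> : inTk k (tau N.+1 k.+1 * p)%g = false.
      by apply/inTkP => [[t'' H']]; exact: (stepA Hk0 Hk H H').
    by rewrite mul0rz oppr0 addr0.
  + have -> : inTk k p = false by apply/inTkP => [[t'' H']]; exact: (stepA Hk0 Hk H' H).
    have -> : inTk k (tau N.+1 k.+1 * p)%g by apply/inTkP; exists t'.
    have [H1 H2 _ _ _] := H.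
    rewrite (sgn_pos H2).
    have H2' : nat_of_ord (p (tau N.+1 k.+1 t')) = 0 by rewrite -H2 permM.
    rewrite (sgn_pos H2') (tauE' Hk (ltnW H1)) add0r mulrzz.
    have -> : k.+1 = ((k - t') + t').+1 by lia.
    by rewrite exprS !exprD mulN1r mulrN opprK mulrCA -expr2 sqrr_sign mulr1.
- have -> : inTk k p = false.
    by apply/inTkP => [[t H]]; apply: Hn; exists t; exact: (stepB Hk0 Hk H).
  have -> : inTk k (tau N.+1 k.+1 * p)%g = false.
    by apply/inTkP => [[t H]]; apply: Hn; exists (tau N.+1 k.+1 t); exact: (stepC Hk0 Hk H).
  by rewrite mul0rz oppr0 addr0.
Qed.

Lemma W1 : W 1 = gr_one N.+1.
Proof.
apply/ffunP => p; rewrite /gr_one /gr !ffunE.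
case: (inTkP 1 p) => [[t [H1 H2 H3 _ _]]|Hn].
- have Ep : p = 1%g.
    apply/permP => x; apply: val_inj => /=; rewrite perm1.
    case: (posnP x) => Hx; last exact: H3.
    have Et : t = x by apply: val_inj => /=; lia.
    rewrite -Et H2; lia.
  by rewrite Ep invg1 perm1 eqxx.
- case: eqP => // E; exfalso; apply: Hn; exists ord0; rewrite E; split => //.
  + by rewrite perm1.
  + by move=> i _; rewrite perm1.
  + move=> i j Hij Hj; move: Hj => /=; lia.
  + move=> i j Hi Hij Hj; lia.
Qed.

Lemma inT_eq (s : S) : inT s = inTk N.+1 s.
Proof.
apply/idP/idP.
- move/existsP=> [t /and3P [/eqP H1 /forallP H2 /forallP H3]]; apply/inTkP; exists t; split => //.
  + by move=> i Hi; have := ltn_ord i; lia.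
  + by move=> i j Hij Hj; have /forallP/(_ j)/implyP := H2 i; apply; rewrite Hij Hj.
  + by move=> i j Hi Hij _; have /forallP/(_ j)/implyP := H3 i; apply; rewrite Hi Hij.
- move/inTkP => [t [_ H2 _ H4 H5]]; apply/existsP; exists t; apply/and3P; split.
  + by apply/eqP.
  + by apply/forallP => i; apply/forallP => j; apply/implyP => /andP [Hij Hj]; exact: H4.
  + by apply/forallP => i; apply/forallP => j; apply/implyP => /andP [Hi Hij]; apply: H5.
Qed.

Lemma v_W : v N = W N.+1.
Proof.
apply/ffunP => p; rewrite sum_ffunE.
under eq_bigr do rewrite ffunMzE ffunE.
rewrite [RHS]ffunE -inT_eq.
case: (boolP (inT p)) => Hp.
- rewrite (bigD1 p) //= eqxx big1 ?addr0; first by rewrite mulrzz mul1r.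
  by move=> s /andP [_ Hs]; rewrite eq_sym (negbTE Hs) mul0rz.
- apply: big1 => s Hs; have : s != p by apply: contraNneq Hp => <-.
  by rewrite eq_sym => /negbTE ->; rewrite mul0rz.
Qed.

Lemma Wprod j : j <= N ->
  W j.+1 = gr_prod [seq (gr_one N.+1 - gr (tau N.+1 i) *~ ((-1) ^+ i))%R | i <- iota 2 j].
Proof.
elim: j => [|j IH] Hj; first exact: W1.
have -> : iota 2 j.+1 = rcons (iota 2 j) j.+2.
  by rewrite -[j.+1]addn1 iotaD -cats1 add2n addn1.
rewrite -cats1 map_cat cats1 gr_prod_rcons -IH; last by lia.
by rewrite Wstep //; lia.
Qed.
End Comb.

Theorem mainTheorem8 (n : nat) : v n.+1 = tau_prod n.+2.
Proof. by rewrite v_W (Wprod (leqnn _)). Qed.
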